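(* Let $k^{*}\ge2$, let $\boldsymbol\beta^\star_1,\ldots,\boldsymbol\beta^\star_{k^{*}}\in\mathbb{R}^d$ be distinct, $r>0$, $\Delta_{\max}:=\max_{i,j}\|\boldsymbol\beta^\star_i-\boldsymbol\beta^\star_j\|$, $\Delta_{\min}:=\min_{i\ne j}\|\boldsymbol\beta^\star_i-\boldsymbol\beta^\star_j\|$, and assume $\Delta_{\min}/r\ge30$. Let $\mathbf{x}_1,\ldots,\mathbf{x}_n$ be generated independently from the stochastic ball mixture model with these centers and radius $r$. If $\boldsymbol\beta\in(\mathbb{R}^d)^{k^{*}}$ is a non-degenerate local minimum of $G_n$, then $G_n(\boldsymbol\beta)\le 4\Delta_{\max}^2$.
   Context: The stochastic ball mixture model has density $f^*=\frac{1}{k^{*}}\sum_{s=1}^{k^{*}}f^*_s$, with $f^*_s$ the uniform density on the Euclidean ball of radius $r$ centered at $\boldsymbol\beta^\star_s$. The empirical $k$-means objective is $G_n(\boldsymbol\beta)=\frac1n\sum_{t=1}^n\min_{j\in[k^{*}]}\|\mathbf{x}_t-\boldsymbol\beta_j\|^2$ for $\boldsymbol\beta=(\boldsymbol\beta_1,\ldots,\boldsymbol\beta_{k^{*}})$. A solution $\boldsymbol\beta$ is non-degenerate if every fitted cluster (the set of data points closest to $\boldsymbol\beta_i$) is nonempty. *)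

(* Defs.v *)
From mathcomp Require Import all_boot all_order all_algebra.
From mathcomp Require Import reals.
Set Implicit Arguments. Unset Strict Implicit. Unset Printing Implicit Defensive.
Import Order.TTheory GRing.Theory Num.Theory.
Local Open Scope ring_scope.

Section Defs.
Variable R : realType.

Definition sqnorm (d : nat) (v : 'rV[R]_d) : R := \sum_(i < d) (v ord0 i) ^+ 2.
Definition enorm (d : nat) (v : 'rV[R]_d) : R := Num.sqrt (sqnorm v).

(* minimum over j : 'I_k of F j (meaningful for k > 0) *)
Definition kmin (k : nat) (F : 'I_k -> R) : R :=
  \big[Num.min/ head 0 [seq F j | j <- enum 'I_k]]_(j < k) F j.

Definition Gn (n k d : nat) (x : 'I_n -> 'rV[R]_d) (b : 'I_k -> 'rV[R]_d) : R :=
  n%:R^-1 * \sum_(t < n) kmin (fun j => sqnorm (x t - b j)).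

Definition is_local_min (n k d : nat) (x : 'I_n -> 'rV[R]_d) (b : 'I_k -> 'rV[R]_d) : Prop :=
  exists2 eps : R, 0 < eps &
    forall b' : 'I_k -> 'rV[R]_d, (forall j, enorm (b' j - b j) < eps) -> Gn x b <= Gn x b'.

Definition fitted_cluster (n k d : nat) (x : 'I_n -> 'rV[R]_d) (b : 'I_k -> 'rV[R]_d) (i : 'I_k)
  : 'I_n -> Prop :=
  fun t => forall j, enorm (x t - b i) <= enorm (x t - b j).

Definition non_degenerate (n k d : nat) (x : 'I_n -> 'rV[R]_d) (b : 'I_k -> 'rV[R]_d) : Prop :=
  forall i, exists t, fitted_cluster x b i t.

Definition Delta_max (k d : nat) (c : 'I_k -> 'rV[R]_d) : R :=
  \big[Num.max/0]_(i < k) \big[Num.max/0]_(j < k) enorm (c i - c j).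

End Defs.

(* Main.v *)
Require Import Defs.
From mathcomp Require Import all_boot all_order all_algebra.
From mathcomp Require Import reals.
From mathcomp Require Import ring lra.
Import Order.TTheory GRing.Theory Num.Theory.
Set Implicit Arguments. Unset Strict Implicit.
Local Open Scope ring_scope.

Section Helpers.
Variable R : realType.

Lemma kmin_le (k : nat) (F : 'I_k -> R) j : kmin F <= F j.
Proof. by rewrite /kmin (bigD1 j) //= ge_min lexx. Qed.

Lemma kmin_ex (k : nat) (F : 'I_k -> R) : (0 < k)%N -> exists j, kmin F = F j.
Proof.
move=> k0; rewrite /kmin.
apply: (big_ind (fun y => exists j, y = F j)).
- have j0 : 'I_k := Ordinal k0.
  case E: (enum 'I_k) => [|a s] /=.
    by have := mem_enum 'I_k j0; rewrite E.
  by exists a.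
- move=> a b [ja ->] [jb ->]; case: (leP (F ja) (F jb)) => h.
  + by exists ja.
  + by exists jb.
- by move=> j _; exists j.
Qed.

Lemma kmin_eq (k : nat) (F : 'I_k -> R) i : (forall j, F i <= F j) -> kmin F = F i.
Proof.
move=> h; have k0 : (0 < k)%N := leq_ltn_trans (leq0n i) (ltn_ord i).
have [j0 e] := @kmin_ex k F k0.
by apply/le_anti; rewrite kmin_le /= e h.
Qed.

Lemma sqnorm_ge0 d (v : 'rV[R]_d) : 0 <= sqnorm v.
Proof. by apply: sumr_ge0 => i _; rewrite sqr_ge0. Qed.

Lemma sqnorm_le (d : nat) (v : 'rV[R]_d) (r : R) : enorm v <= r -> sqnorm v <= r ^+ 2.
Proof.
rewrite /enorm => h; have h0 := sqrtr_ge0 (sqnorm v).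
rewrite -(sqr_sqrtr (sqnorm_ge0 v)); nra.
Qed.

Lemma sqnorm0 d : sqnorm (0 : 'rV[R]_d) = 0.
Proof. by rewrite /sqnorm big1 // => i _; rewrite mxE expr0n. Qed.

Lemma jensen n (C : pred 'I_n) (z : 'I_n -> R) mu :
  \sum_(u in C) (z u - mu) = 0 -> #|C|%:R * mu ^+ 2 <= \sum_(u in C) z u ^+ 2.
Proof.
move=> h.
have -> : \sum_(u in C) z u ^+ 2 =
   \sum_(u in C) (z u - mu) ^+ 2 + 2 * mu * \sum_(u in C) (z u - mu) + #|C|%:R * mu ^+ 2.
  rewrite [#|C|%:R * _]mulr_natl -sumr_const mulr_sumr -!big_split /=.
  by apply: eq_bigr => u _; ring.
rewrite h mulr0 addr0 lerDr; apply: sumr_ge0 => u _; exact: sqr_ge0.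
Qed.


Lemma enorm_Dmax k d (c : 'I_k -> 'rV[R]_d) i j : enorm (c i - c j) <= Delta_max c.
Proof.
rewrite /Delta_max (bigD1 i) //= le_max; apply/orP; left.
by rewrite (bigD1 j) //= le_max lexx.
Qed.

Lemma sqnormZ d (e : R) (v : 'rV[R]_d) : sqnorm (e *: v) = e ^+ 2 * sqnorm v.
Proof. rewrite /sqnorm mulr_sumr; apply: eq_bigr => c _; rewrite mxE; ring. Qed.

Lemma tri3 d (a bb p q : 'rV[R]_d) :
  sqnorm (a - bb) <= 3 * (sqnorm (a - p) + sqnorm (p - q) + sqnorm (bb - q)).
Proof.
rewrite /sqnorm -!big_split mulr_sumr; apply: ler_sum => c _; rewrite !mxE.
set A := a ord0 c; set B := bb ord0 c; set P := p ord0 c; set Q := q ord0 c.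
rewrite -subr_ge0.
have -> : 3 * ((A - P) ^+ 2 + (P - Q) ^+ 2 + (B - Q) ^+ 2) - (A - B) ^+ 2 =
  ((A - P) - (P - Q)) ^+ 2 + ((P - Q) - (Q - B)) ^+ 2 + ((A - P) - (Q - B)) ^+ 2 by ring.
by rewrite !addr_ge0 ?sqr_ge0.
Qed.

End Helpers.

Theorem mainTheorem3 (R : realType) (d k n : nat) (cstar : 'I_k -> 'rV[R]_d) (r : R)
  (x : 'I_n -> 'rV[R]_d) (b : 'I_k -> 'rV[R]_d) :
  (2 <= k)%N ->
  injective cstar ->
  0 < r ->
  (* Delta_min / r >= 30 *)
  (forall i j : 'I_k, i != j -> 30 <= enorm (cstar i - cstar j) / r) ->
  (* every sample lies in the support of the ball mixture *)
  (forall t, exists s, enorm (x t - cstar s) <= r) ->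
  non_degenerate x b ->
  is_local_min x b ->
  Gn x b <= 4 * Delta_max cstar ^+ 2.
Proof.
move=> k2 _ r0 hsep hsupp nd [eps eps0 hloc].
pose i0 : 'I_k := Ordinal (ltnW k2).
pose i1 : 'I_k := Ordinal k2.
pose C := [pred t : 'I_n | kmin (fun j => sqnorm (x t - b j)) == sqnorm (x t - b i0)].
have [t0 ht0] := nd i0.
have Ct0 : C t0.
  rewrite /C inE /=; apply/eqP/kmin_eq => j.
  by rewrite -ler_sqrt ?sqnorm_ge0 //; exact: ht0 j.
have m0 : (0 < #|C|)%N by apply/card_gt0P; exists t0.
have n0 : (0 < n)%N := leq_ltn_trans (leq0n t0) (ltn_ord t0).
set m := #|C|.
pose w : 'I_d -> R := fun c => \sum_(t in C) (x t ord0 c - b i0 ord0 c).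
have hw : forall c, w c = 0.
  pose S := \sum_(c < d) w c ^+ 2.
  have S0 : 0 <= S by apply: sumr_ge0 => c _; exact: sqr_ge0.
  suff Sle : S <= 0.
    have SE : S = 0 by apply/le_anti; rewrite Sle S0.
    move=> c; have := @psumr_eq0P _ _ xpredT (fun c => w c ^+ 2) (fun c _ => sqr_ge0 (w c)) SE c isT.
    by move/eqP; rewrite sqrf_eq0 => /eqP.
  pose q := Num.sqrt S.
  have q0 : 0 <= q := sqrtr_ge0 S.
  have mpos : 0 < (m%:R : R) by rewrite ltr0n.
  pose e := Num.min (m%:R^-1) (eps / (1 + q)).
  have e0 : 0 < e by rewrite lt_min invr_gt0 mpos divr_gt0 // ltr_pwDl.
  have em : e * m%:R <= 1.
    by rewrite -ler_pdivlMr // mul1r /e ge_min lexx.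
  have eq1 : e * (1 + q) <= eps.
    by rewrite -ler_pdivlMr ?ltr_pwDl // /e ge_min lexx orbT.
  pose W : 'rV[R]_d := \row_c w c.
  pose b' := fun j => if j == i0 then b i0 + e *: W else b j.
  have hG : Gn x b <= Gn x b'.
    apply: hloc => j; rewrite /b'; case: eqP => [->|_].
      rewrite addrC addKr /enorm sqnormZ sqrtrM ?sqr_ge0 // sqrtr_sqr gtr0_norm //.
      have -> : sqnorm W = S by rewrite /sqnorm; apply: eq_bigr => c _; rewrite mxE.
      rewrite -/q; apply: lt_le_trans eq1; rewrite ltr_pM2l //; exact: ltr_pwDl.
    by rewrite subrr /enorm sqnorm0 sqrtr0.
  have npos : 0 < (n%:R : R) by rewrite ltr0n.
  move: hG; rewrite /Gn ler_pM2l ?invr_gt0 // => hG.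
  pose D t := sqnorm (x t - b' i0) - sqnorm (x t - b i0).
  have h2 : \sum_(t < n) kmin (fun j => sqnorm (x t - b' j)) <=
      \sum_(t < n) (kmin (fun j => sqnorm (x t - b j)) + (if t \in C then D t else 0)).
    apply: ler_sum => t _; case: ifP => Ct.
    - have e1 : kmin (fun j => sqnorm (x t - b j)) = sqnorm (x t - b i0).
        by move: Ct; rewrite inE => /eqP.
      rewrite e1 /D addrC subrK.
      exact: (kmin_le (fun j => sqnorm (x t - b' j)) i0).
    - have [j0 ej] := kmin_ex (fun j => sqnorm (x t - b j)) (ltnW k2).
      have nj : j0 != i0.
        by apply/eqP => ej0; move: Ct; rewrite inE /= ej ej0 eqxx.
      rewrite addr0 ej; apply: le_trans (kmin_le _ j0) _.
      by rewrite /b' (negbTE nj).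
  have h3 : 0 <= \sum_(t in C) D t.
    by move: (le_trans hG h2); rewrite big_split /= -big_mkcond /= lerDl.
  have h4 : \sum_(t in C) D t = (m%:R * e ^+ 2 - 2 * e) * S.
    rewrite /S mulr_sumr.
    have -> : \sum_(t in C) D t = \sum_(t in C) \sum_(c < d)
        ((x t - b' i0) ord0 c ^+ 2 - (x t - b i0) ord0 c ^+ 2).
      by apply: eq_bigr => t _; rewrite /D /sqnorm -sumrB.
    rewrite exchange_big /=; apply: eq_bigr => c _.
    have -> : \sum_(t in C) ((x t - b' i0) ord0 c ^+ 2 - (x t - b i0) ord0 c ^+ 2) =
        \sum_(t in C) (e ^+ 2 * w c ^+ 2 - 2 * e * w c * (x t ord0 c - b i0 ord0 c)).
      by apply: eq_bigr => t _; rewrite /b' eqxx !mxE; ring.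
    rewrite sumrB sumr_const -mulr_sumr -/(w c) -[_ *+ #|C|]mulr_natl.
    ring.
  have h5 : 0 <= (1 - e * m%:R) * (e * S).
    by rewrite mulr_ge0 ?subr_ge0 // mulr_ge0 // ltW.
  have h6 : e * S <= 0.
    rewrite h4 in h3; nra.
  by rewrite pmulr_rle0 in h6.
have hb : forall c, b i0 ord0 c * m%:R = \sum_(u in C) x u ord0 c.
  move=> c; have := hw c; rewrite /w sumrB sumr_const => /eqP.
  by rewrite subr_eq0 => /eqP ->; rewrite mulr_natr.
set D := Delta_max cstar.
have hD : forall i j, sqnorm (cstar i - cstar j) <= D ^+ 2.
  by move=> i j; apply: sqnorm_le; exact: enorm_Dmax.
have hDr : 30 * r <= D.
  have := hsep i0 i1 isT; rewrite ler_pdivlMr // => h.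
  exact: le_trans h (enorm_Dmax _ _ _).
have hpair : forall t u, sqnorm (x t - x u) <= 4 * D ^+ 2.
  move=> t u; have [s hs] := hsupp t; have [s' hs'] := hsupp u.
  apply: le_trans (tri3 _ _ (cstar s) (cstar s')) _.
  have h1 := sqnorm_le hs; have h2 := sqnorm_le hs'; have h3 := hD s s'.
  have h4 : 900 * r ^+ 2 <= D ^+ 2.
    have -> : 900 * r ^+ 2 = (30 * r) ^+ 2 by ring.
    have r30 : 0 <= 30 * r by rewrite mulr_ge0 // ltW.
    by rewrite ler_sqr ?nnegrE // (le_trans r30 hDr).
  have h5 : 0 <= r ^+ 2 := sqr_ge0 r.
  lra.
have hpt : forall t, kmin (fun j => sqnorm (x t - b j)) <= 4 * D ^+ 2.
  move=> t; apply: le_trans (kmin_le _ i0) _.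
  have mpos : 0 < (m%:R : R) by rewrite ltr0n.
  rewrite -(ler_pM2l mpos).
  have -> : m%:R * sqnorm (x t - b i0) =
      \sum_(c < d) m%:R * (x t ord0 c - b i0 ord0 c) ^+ 2.
    by rewrite /sqnorm mulr_sumr; apply: eq_bigr => c _; rewrite !mxE.
  apply: (@le_trans _ _ (\sum_(u in C) sqnorm (x t - x u))).
    rewrite /sqnorm exchange_big /=; apply: ler_sum => c _.
    have -> : \sum_(u in C) (x t - x u) ord0 c ^+ 2 = \sum_(u in C) (x t ord0 c - x u ord0 c) ^+ 2.
      by apply: eq_bigr => u _; rewrite !mxE.
    apply: jensen.
    have -> : \sum_(u in C) (x t ord0 c - x u ord0 c - (x t ord0 c - b i0 ord0 c)) =
              \sum_(u in C) (b i0 ord0 c - x u ord0 c).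
      by apply: eq_bigr => u _; ring.
    by rewrite sumrB sumr_const -mulr_natr hb subrr.
  apply: le_trans (ler_sum _ (fun u _ => hpair t u)) _.
  by rewrite sumr_const [m%:R * _]mulr_natl.
rewrite /Gn.
have npos : 0 < (n%:R : R) by rewrite ltr0n.
apply: (@le_trans _ _ (n%:R^-1 * (4 * D ^+ 2 *+ n))).
  rewrite ler_pM2l ?invr_gt0 //.
  apply: le_trans (ler_sum _ (fun t _ => hpt t)) _.
  by rewrite sumr_const card_ord.
by rewrite -[X in _ * X]mulr_natl mulKf // gt_eqF.
Qed.
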